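(* Let $f\in\mathrm{Homeo}(\mathbb T^2)$ be semiconjugate to a rigid rotation $R_\rho$ of $\mathbb S^1$ and assume the non-wandering set $\Omega(f)$ is externally transitive. Then the semiconjugacy is unique modulo rotations: for any two semiconjugacies $h_1,h_2$ from $f$ to $R_\rho$ there is a rigid rotation $R$ of $\mathbb S^1$ with $h_1=R\circ h_2$ on all of $\mathbb T^2$.
   Context: A semiconjugacy from $f$ to $R_\rho(x)=x+\rho$ is a continuous surjection $h:\mathbb T^2\to\mathbb S^1$ with $h\circ f=R_\rho\circ h$. An $f$-invariant set $\Omega$ is externally transitive if for all $x,y\in\Omega$ and neighbourhoods $U_x,U_y$ in $\mathbb T^2$ there is $n\in\mathbb N$ with $f^n(U_x)\cap U_y\ne\emptyset$. *)

(* Defs.v *)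
(* Model: the circle S^1 = R/Z and the torus T^2 = R^2/Z^2 are represented
   by their covering spaces R and R*R together with the quotient distances;
   maps on the quotients are maps on representatives that respect the
   equivalence relation ("distance 0"), and equalities on the quotient are
   stated as "distance 0". *)
From Stdlib Require Import Reals.
Open Scope R_scope.

(* distance on S^1 = R/Z : distance from x - y to the nearest integer *)
Definition cdist (x y : R) : R :=
  Rmin (frac_part (x - y)) (1 - frac_part (x - y)).

Definition ceq (x y : R) : Prop := cdist x y = 0.

Definition T2 := (R * R)%type.

Definition tdist (p q : T2) : R :=
  Rmax (cdist (fst p) (fst q)) (cdist (snd p) (snd q)).

Definition teq (p q : T2) : Prop := tdist p q = 0.

Definition T2_map (f : T2 -> T2) : Prop :=
  forall p q, teq p q -> teq (f p) (f q).

Definition T2_continuous (f : T2 -> T2) : Prop :=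
  forall p eps, 0 < eps -> exists delta, 0 < delta /\
    forall q, tdist p q < delta -> tdist (f p) (f q) < eps.

Definition T2_homeo (f : T2 -> T2) : Prop :=
  T2_map f /\ T2_continuous f /\
  exists g : T2 -> T2, T2_map g /\ T2_continuous g /\
    (forall p, teq (g (f p)) p) /\ (forall p, teq (f (g p)) p).

Fixpoint iter (n : nat) (f : T2 -> T2) (p : T2) : T2 :=
  match n with
  | O => p
  | S m => f (iter m f p)
  end.

Definition rot (rho x : R) : R := x + rho.

Definition semiconj (f : T2 -> T2) (rho : R) (h : T2 -> R) : Prop :=
  (forall p q, teq p q -> ceq (h p) (h q)) /\
  (forall p eps, 0 < eps -> exists delta, 0 < delta /\
     forall q, tdist p q < delta -> cdist (h p) (h q) < eps) /\
  (forall y : R, exists p, ceq (h p) y) /\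
  (forall p, ceq (h (f p)) (rot rho (h p))).

(* the non-wandering set Omega(f): every neighbourhood U of x meets
   f^n(U) for some n >= 1 (neighbourhoods taken to be open balls) *)
Definition nonwandering (f : T2 -> T2) (x : T2) : Prop :=
  forall eps, 0 < eps -> exists n : nat, (1 <= n)%nat /\
    exists y, tdist y x < eps /\ tdist (iter n f y) x < eps.

Definition externally_transitive (f : T2 -> T2) (Omega : T2 -> Prop) : Prop :=
  forall x y, Omega x -> Omega y ->
  forall ex ey, 0 < ex -> 0 < ey ->
    exists n : nat, (1 <= n)%nat /\
      exists z, tdist z x < ex /\ tdist (iter n f z) y < ey.

(* Main.v *)
Require Import Defs.
From Stdlib Require Import Reals Rtopology Lra Lia ZArith ClassicalEpsilon.
Open Scope R_scope.

Lemma cdist_le x y (k : Z) : cdist x y <= Rabs (x - y - IZR k).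
Proof.
  unfold cdist, frac_part.
  set (t0 := x - y). set (m := Int_part t0).
  destruct (base_Int_part t0) as [H1 H2]. fold m in H1, H2.
  replace (t0 - IZR k) with ((t0 - IZR m) + IZR (m - k)) by (rewrite minus_IZR; ring).
  destruct (Z_le_gt_dec 0%Z (m - k)%Z) as [Hz|Hz].
  - apply IZR_le in Hz. eapply Rle_trans; [apply Rmin_l|].
    rewrite Rabs_right; lra.
  - assert (Hz' : (m - k <= -1)%Z) by lia. apply IZR_le in Hz'.
    eapply Rle_trans; [apply Rmin_r|].
    rewrite Rabs_left; lra.
Qed.

Lemma cdist_ex x y : exists k : Z, cdist x y = Rabs (x - y - IZR k).
Proof.
  unfold cdist, frac_part.
  set (t0 := x - y). set (m := Int_part t0).
  destruct (base_Int_part t0) as [H1 H2]. fold m in H1, H2.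
  unfold Rmin. destruct (Rle_dec (t0 - IZR m) (1 - (t0 - IZR m))).
  - exists m. rewrite Rabs_right; lra.
  - exists (m + 1)%Z. rewrite plus_IZR. rewrite Rabs_left; lra.
Qed.

Lemma cdist_nonneg x y : 0 <= cdist x y.
Proof. destruct (cdist_ex x y) as [k ->]. apply Rabs_pos. Qed.

Lemma cdist_sym x y : cdist x y = cdist y x.
Proof.
  apply Rle_antisym.
  - destruct (cdist_ex y x) as [k ->].
    eapply Rle_trans; [apply (cdist_le x y (- k))|].
    rewrite opp_IZR. replace (x - y - - IZR k) with (- (y - x - IZR k)) by ring.
    rewrite Rabs_Ropp; lra.
  - destruct (cdist_ex x y) as [k ->].
    eapply Rle_trans; [apply (cdist_le y x (- k))|].
    rewrite opp_IZR. replace (y - x - - IZR k) with (- (x - y - IZR k)) by ring.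
    rewrite Rabs_Ropp; lra.
Qed.

Lemma cdist_tri x y z : cdist x z <= cdist x y + cdist y z.
Proof.
  destruct (cdist_ex x y) as [k1 ->]. destruct (cdist_ex y z) as [k2 ->].
  eapply Rle_trans; [apply (cdist_le x z (k1 + k2))|].
  rewrite plus_IZR.
  replace (x - z - (IZR k1 + IZR k2)) with ((x - y - IZR k1) + (y - z - IZR k2)) by ring.
  apply Rabs_triang.
Qed.

Lemma cdist_sub a b c e : cdist (a - b) (c - e) <= cdist a c + cdist b e.
Proof.
  destruct (cdist_ex a c) as [k1 ->]. destruct (cdist_ex b e) as [k2 ->].
  eapply Rle_trans; [apply (cdist_le _ _ (k1 - k2))|].
  rewrite minus_IZR.
  replace (a - b - (c - e) - (IZR k1 - IZR k2)) with ((a - c - IZR k1) + - (b - e - IZR k2)) by ring.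
  eapply Rle_trans; [apply Rabs_triang|]. rewrite Rabs_Ropp; lra.
Qed.

Lemma cdist_frac x a : cdist x a <= Rabs (frac_part x - a).
Proof.
  eapply Rle_trans; [apply (cdist_le x a (Int_part x))|].
  unfold frac_part. right. f_equal. ring.
Qed.

Lemma tdist_sym p q : tdist p q = tdist q p.
Proof. unfold tdist. rewrite (cdist_sym (fst p)), (cdist_sym (snd p)). reflexivity. Qed.

Lemma iter_add f (n m : nat) p : Defs.iter (n + m)%nat f p = Defs.iter n f (Defs.iter m f p).
Proof. induction n as [|n IH]; simpl; [reflexivity | rewrite IH; reflexivity]. Qed.

Lemma accum (s : nat -> T2) : exists q : T2, forall eps, 0 < eps -> forall N : nat,
  exists n, (N <= n)%nat /\ tdist (s n) q < eps.
Proof.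
  set (u := fun n => frac_part (fst (s n))).
  set (v := fun n => frac_part (snd (s n))).
  assert (Hb : forall r, 0 <= frac_part r <= 1).
  { intro r; destruct (base_fp r); lra. }
  destruct (Bolzano_Weierstrass u _ (compact_P3 0 1) (fun n => Hb _)) as [a Ha].
  assert (Hg : forall k N : nat, exists n, (N <= n)%nat /\ Rabs (u n - a) < / (INR k + 1)).
  { intros k N.
    assert (Hp : 0 < / (INR k + 1)) by (apply Rinv_0_lt_compat; pose proof (pos_INR k); lra).
    destruct (Ha (disc a (mkposreal _ Hp)) N) as [n [Hn Hd]].
    - exists (mkposreal _ Hp). intros y Hy; exact Hy.
    - exists n; split; auto. }
  set (phi := fun k => proj1_sig (constructive_indefinite_description _ (Hg k k))).
  assert (Hphi : forall k, (k <= phi k)%nat /\ Rabs (u (phi k) - a) < / (INR k + 1)).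
  { intro k. unfold phi. destruct (constructive_indefinite_description _ _) as [n Hn]. exact Hn. }
  destruct (Bolzano_Weierstrass (fun k => v (phi k)) _ (compact_P3 0 1) (fun n => Hb _)) as [b Hb2].
  exists (a, b). intros eps Heps N.
  destruct (archimed (/ eps)) as [Harch _].
  set (K := Z.to_nat (up (/ eps))).
  assert (HK : / eps < INR K).
  { unfold K. rewrite INR_IZR_INZ. rewrite Z2Nat.id; [lra|].
    apply le_IZR. pose proof (Rinv_0_lt_compat _ Heps). lra. }
  destruct (Hb2 (disc b (mkposreal _ Heps)) (max N K)) as [k [Hk Hd]].
  - exists (mkposreal _ Heps). intros y Hy; exact Hy.
  - destruct (Hphi k) as [Hk1 Hk2].
    exists (phi k). split; [lia|].
    unfold tdist. apply Rmax_lub_lt; simpl.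
    + eapply Rle_lt_trans; [apply cdist_frac|]. fold (u (phi k)).
      eapply Rlt_le_trans; [exact Hk2|].
      assert (INR K <= INR k) by (apply le_INR; lia).
      assert (0 < / eps) by (apply Rinv_0_lt_compat; lra).
      replace eps with (/ / eps) by (field; lra).
      apply Rinv_le_contravar; lra.
    + eapply Rle_lt_trans; [apply cdist_frac|]. exact Hd.
Qed.

Theorem mainTheorem9 (f : T2 -> T2) (rho : R) :
  T2_homeo f ->
  (exists h : T2 -> R, semiconj f rho h) ->
  externally_transitive f (nonwandering f) ->
  forall h1 h2 : T2 -> R, semiconj f rho h1 -> semiconj f rho h2 ->
    exists c : R, forall p : T2, ceq (h1 p) (rot c (h2 p)).
Proof.
  intros _ _ HET h1 h2 [_ [C1 [_ I1]]] [_ [C2 [_ I2]]].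
  set (d := fun p => h1 p - h2 p).
  assert (Hinv1 : forall x, cdist (d (f x)) (d x) = 0).
  { intro x. apply Rle_antisym; [|apply cdist_nonneg].
    unfold d. replace (h1 x - h2 x) with ((h1 x + rho) - (h2 x + rho)) by ring.
    eapply Rle_trans; [apply cdist_sub|].
    specialize (I1 x); specialize (I2 x). unfold ceq, rot in *. lra. }
  assert (Hinv : forall n x, cdist (d (Defs.iter n f x)) (d x) = 0).
  { induction n as [|n IH]; intro x; simpl.
    - apply Rle_antisym; [|apply cdist_nonneg].
      destruct (cdist_ex (d x) (d x)) as [k Hk].
      eapply Rle_trans; [apply (cdist_le _ _ 0%Z)|]. simpl.
      replace (d x - d x - 0) with 0 by ring. rewrite Rabs_R0; lra.
    - apply Rle_antisym; [|apply cdist_nonneg].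
      eapply Rle_trans; [apply (cdist_tri _ (d (Defs.iter n f x)))|].
      rewrite Hinv1, IH; lra. }
  assert (Hc : forall q eps, 0 < eps -> exists delta, 0 < delta /\
     forall x, tdist q x < delta -> cdist (d q) (d x) < eps).
  { intros q eps Heps.
    destruct (C1 q (eps/2)) as [d1 [Hd1 H1]]; [lra|].
    destruct (C2 q (eps/2)) as [d2 [Hd2 H2]]; [lra|].
    exists (Rmin d1 d2). split; [apply Rmin_pos; lra|].
    intros x Hx. unfold d. eapply Rle_lt_trans; [apply cdist_sub|].
    assert (tdist q x < d1) by (eapply Rlt_le_trans; [exact Hx| apply Rmin_l]).
    assert (tdist q x < d2) by (eapply Rlt_le_trans; [exact Hx| apply Rmin_r]).
    specialize (H1 x H); specialize (H2 x H0). lra. }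
  assert (HO : forall x y, nonwandering f x -> nonwandering f y -> cdist (d x) (d y) = 0).
  { intros x y Hx Hy. apply Rle_antisym; [|apply cdist_nonneg].
    apply Rnot_lt_le. intro Hlt. set (eps := cdist (d x) (d y)) in *.
    destruct (Hc x (eps/3)) as [dx [Hdx Hx']]; [lra|].
    destruct (Hc y (eps/3)) as [dy [Hdy Hy']]; [lra|].
    destruct (HET x y Hx Hy dx dy Hdx Hdy) as [n [_ [z [Hz1 Hz2]]]].
    rewrite tdist_sym in Hz1, Hz2.
    specialize (Hx' z Hz1). specialize (Hy' _ Hz2).
    pose proof (Hinv n z).
    assert (eps <= cdist (d x) (d z) + (cdist (d z) (d (Defs.iter n f z)) + cdist (d (Defs.iter n f z)) (d y))).
    { eapply Rle_trans; [apply (cdist_tri _ (d z))|].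
      apply Rplus_le_compat_l. apply cdist_tri. }
    rewrite (cdist_sym (d z)), H in H0. rewrite (cdist_sym _ (d y)) in H0. lra. }
  assert (Hw : forall p, exists q, nonwandering f q /\ cdist (d p) (d q) = 0).
  { intro p. destruct (accum (fun n => Defs.iter n f p)) as [q Hq].
    exists q. split.
    - intros eps Heps.
      destruct (Hq eps Heps 0%nat) as [n1 [_ Hn1]].
      destruct (Hq eps Heps (S n1)) as [n2 [Hn2 Hn2']].
      exists (n2 - n1)%nat. split; [lia|].
      exists (Defs.iter n1 f p). split; [exact Hn1|].
      rewrite <- iter_add. replace (n2 - n1 + n1)%nat with n2 by lia. exact Hn2'.
    - apply Rle_antisym; [|apply cdist_nonneg].
      apply Rnot_lt_le. intro Hlt.
      destruct (Hc q _ Hlt) as [de [Hde Hq']].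
      destruct (Hq de Hde 0%nat) as [n [_ Hn]].
      rewrite tdist_sym in Hn. specialize (Hq' _ Hn).
      pose proof (Hinv n p).
      pose proof (cdist_tri (d p) (d (Defs.iter n f p)) (d q)).
      rewrite (cdist_sym (d p) (d (Defs.iter n f p))), H, (cdist_sym (d (Defs.iter n f p)) (d q)) in H0. lra. }
  destruct (Hw (0,0)) as [q0 [Hq0 _]].
  exists (d q0). intro p. unfold ceq, rot.
  destruct (Hw p) as [q [Hq Hpq]].
  apply Rle_antisym; [|apply cdist_nonneg].
  replace (cdist (h1 p) (h2 p + d q0)) with (cdist (d p) (d q0)).
  - pose proof (cdist_tri (d p) (d q) (d q0)). rewrite Hpq, (HO q q0 Hq Hq0) in H. lra.
  - unfold cdist. replace (h1 p - (h2 p + d q0)) with (d p - d q0) by (unfold d; ring). reflexivity.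
Qed.
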